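(* Let $\Omega\subset\mathbb{R}^n$ be a bounded domain that is star-shaped with respect to a point $x^*\in\Omega$, let $g\in C(\Omega)$, and let $u=SS^+(g)$ be the upper star-shaped envelope of $g$ with respect to $x^*$. Then $u$ is the viscosity solution of the obstacle problem \[ \min\{u(x)-g(x),\ (x-x^* )\cdot\nabla u(x)\}=0 \quad\text{in }\Omega, \] together with $u(x^* )=g(x^* )$.
   Context: A set $S$ is star-shaped with respect to $x^*$ if $x\in S$ implies $tx^*+(1-t)x\in S$ for all $t\in[0,1]$; a function $v:\Omega\to\mathbb{R}$ is star-shaped with respect to $x^*$ if all its sublevel sets $\{v\le\alpha\}$ are. $SS^+(g)(x)=\inf\{v(x)\mid v:\Omega\to\mathbb{R}\text{ star-shaped w.r.t. } x^*,\ v\ge g\}$. For $F(x,r,p)$, an upper (lower) semicontinuous $u$ is a viscosity subsolution (supersolution) of $F[u]=0$ in $\Omega$ if for every $\phi\in C^1(\Omega)$, whenever $u-\phi$ has a local maximum (minimum) at $x\in\Omega$, $F(x,u(x),\nabla\phi(x))\le 0$ ($\ge 0$); a viscosity solution is both. Here $F(x,r,p)=\min\{r-g(x),(x-x^* )\cdot p\}$. *)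

(* Defs.v *)
From HB Require Import structures.
From mathcomp Require Import all_boot all_order all_algebra.
From mathcomp Require Import all_classical all_reals all_analysis.
Set Implicit Arguments. Unset Strict Implicit. Unset Printing Implicit Defensive.
Import Order.TTheory GRing.Theory Num.Theory.
Import numFieldNormedType.Exports.
Local Open Scope classical_set_scope.
Local Open Scope ring_scope.

Section Defs.
Variables (R : realType) (n : nat).
Notation V := 'rV[R]_n.

Definition dotp (a b : V) : R := \sum_(i < n) a ord0 i * b ord0 i.

Definition grad (phi : V -> R) (x : V) : V :=
  \row_(i < n) ('D_(delta_mx 0 i) phi x).

Definition star_shaped_set (xs : V) (S : set V) : Prop :=
  forall x, S x -> forall t : R, 0 <= t <= 1 -> S (t *: xs + (1 - t) *: x).

Definition star_shaped_fun (Omega : set V) (xs : V) (v : V -> R) : Prop :=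
  forall alpha : R, star_shaped_set xs [set x | Omega x /\ v x <= alpha].

Definition SSplus (Omega : set V) (xs : V) (g : V -> R) (x : V) : R :=
  inf [set v x | v in [set v : V -> R | star_shaped_fun Omega xs v /\
                                       (forall y, Omega y -> g y <= v y)]].

Definition C1_on (Omega : set V) (phi : V -> R) : Prop :=
  (forall x, Omega x -> differentiable phi x) /\
  {within Omega, continuous (grad phi)}.

Definition usc_on (Omega : set V) (u : V -> R) : Prop :=
  forall x, Omega x -> forall e : R, 0 < e ->
    \forall y \near x, Omega y -> u y < u x + e.

Definition lsc_on (Omega : set V) (u : V -> R) : Prop :=
  forall x, Omega x -> forall e : R, 0 < e ->
    \forall y \near x, Omega y -> u x - e < u y.

Definition local_max_at (Omega : set V) (w : V -> R) (x : V) : Prop :=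
  \forall y \near x, Omega y -> w y <= w x.

Definition local_min_at (Omega : set V) (w : V -> R) (x : V) : Prop :=
  \forall y \near x, Omega y -> w x <= w y.

Definition Fobs (g : V -> R) (xs : V) (x : V) (r : R) (p : V) : R :=
  Num.min (r - g x) (dotp (x - xs) p).

Definition visc_subsol (Omega : set V) (F : V -> R -> V -> R) (u : V -> R) :=
  usc_on Omega u /\
  forall phi : V -> R, C1_on Omega phi -> forall x, Omega x ->
    local_max_at Omega (fun y => u y - phi y) x -> F x (u x) (grad phi x) <= 0.

Definition visc_supersol (Omega : set V) (F : V -> R -> V -> R) (u : V -> R) :=
  lsc_on Omega u /\
  forall phi : V -> R, C1_on Omega phi -> forall x, Omega x ->
    local_min_at Omega (fun y => u y - phi y) x -> 0 <= F x (u x) (grad phi x).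

Definition visc_sol (Omega : set V) (F : V -> R -> V -> R) (u : V -> R) :=
  visc_subsol Omega F u /\ visc_supersol Omega F u.

End Defs.

(* Main.v *)
Require Import Defs.
From HB Require Import structures.
From mathcomp Require Import all_boot all_order all_algebra.
From mathcomp Require Import all_classical all_reals all_analysis.
From mathcomp Require Import ring lra.
Import Order.TTheory GRing.Theory Num.Theory.
Import numFieldNormedType.Exports.
Local Open Scope classical_set_scope.
Local Open Scope ring_scope.

Section Aux.
Context {R : realType} {n : nat}.
Notation V := 'rV[R]_n.
Variables (Omega : set V) (xs : V) (g : V -> R).
Hypotheses (Oxs : Omega xs) (sO : star_shaped_set xs Omega)
  (gc : {in Omega, continuous g}).

Definition q (x : V) (t : R) : V := t *: xs + (1 - t) *: x.

Lemma qq x s t : q (q x s) t = q x (t + s - t * s).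
Proof.
rewrite /q scalerDr !scalerA addrA -scalerDl; congr (_ *: _ + _ *: _); ring.
Qed.

Lemma q0 x : q x 0 = x.
Proof. by rewrite /q scale0r add0r subr0 scale1r. Qed.

Lemma qxs t : q xs t = xs.
Proof. by rewrite /q -scalerDl addrC subrK scale1r. Qed.

Lemma qE x h : h *: (x - xs) + x = q x (- h).
Proof. rewrite /q opprK scalerBr scalerDl scale1r scaleNr.
by rewrite addrC addrA [- _ + _]addrC. Qed.

Lemma qO x t : Omega x -> 0 <= t <= 1 -> Omega (q x t).
Proof. by move=> Ox t01; apply: sO. Qed.

Lemma itv01 (s t : R) : 0 <= s <= 1 -> 0 <= t <= 1 -> 0 <= t + s - t * s <= 1.
Proof. move=> /andP[? ?] /andP[? ?]; apply/andP; split; nra. Qed.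

Lemma qcont x t : {for t, continuous (q x)}.
Proof.
have -> : q x = (fun r => r *: xs) + (fun r => (1 - r) *: x) by [].
apply: continuousD.
- apply: (@continuousZ _ _ _ id (fun=> xs)); [exact: cvg_id | exact: cvg_cst].
- have -> : (fun r : R => (1 - r) *: x) = (fun r => x - r *: x).
    by apply: funext => r; rewrite scalerBl scale1r.
  apply: cvgB; first exact: cvg_cst.
  apply: (@continuousZ _ _ _ id (fun=> x)); [exact: cvg_id | exact: cvg_cst].
Qed.

Lemma gcO y : Omega y -> {for y, continuous g}.
Proof. by move=> Oy; apply: gc; rewrite inE. Qed.

Lemma gq_cont x t : Omega x -> 0 <= t <= 1 -> {for t, continuous (fun r => g (q x r))}.
Proof.
move=> Ox t01; apply: (@continuous_comp _ _ _ (q x) g); first exact: qcont.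
apply: gcO. exact: qO.
Qed.

Lemma evt x : Omega x -> exists2 c, 0 <= c <= 1 &
  forall t, 0 <= t <= 1 -> g (q x t) <= g (q x c).
Proof.
move=> Ox.
have cw : {within `[0, 1], continuous (fun r => g (q x r))}.
  apply: continuous_in_subspaceT => r; rewrite inE /= in_itv /= => r01.
  exact: gq_cont.
have [c c01 cmax] := @EVT_max R (fun r => g (q x r)) 0 1 ler01 cw.
exists c; first by move: c01; rewrite in_itv.
by move=> t t01; apply: cmax; rewrite in_itv.
Qed.

Definition M x := sup [set g (q x t) | t in `[0, 1]].

Lemma M_max x : Omega x -> exists2 c, 0 <= c <= 1 &
  M x = g (q x c) /\ forall t, 0 <= t <= 1 -> g (q x t) <= M x.
Proof.
move=> Ox; have [c c01 cmax] := evt x Ox.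
have eqM : M x = g (q x c).
  apply/eqP; rewrite eq_le; apply/andP; split.
  - apply: ge_sup; first by exists (g (q x c)), c => //=; rewrite in_itv.
    by move=> _ [t /= t01 <-]; apply: cmax; move: t01; rewrite in_itv.
  - apply: ub_le_sup; last by exists c => //=; rewrite in_itv.
    by exists (g (q x c)) => _ [t /= t01 <-]; apply: cmax; move: t01; rewrite in_itv.
exists c; first exact: c01.
split; first exact: eqM.
move=> t t01; rewrite eqM; exact: cmax.
Qed.

Lemma M_mono y t : Omega y -> 0 <= t <= 1 -> M (q y t) <= M y.
Proof.
move=> Oy t01; have [c c01 [-> _]] := M_max (q y t) (qO y t Oy t01).
rewrite qq; have [_ _ [_ H]] := M_max y Oy; apply: H; exact: itv01.
Qed.

Lemma M_star : star_shaped_fun Omega xs M.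
Proof.
move=> alpha y [Oy My] t t01; split; first exact: sO.
exact: le_trans (M_mono y t Oy t01) My.
Qed.

Lemma g_le_M y : Omega y -> g y <= M y.
Proof.
move=> Oy; have [_ _ [_ H]] := M_max y Oy; rewrite -{1}(q0 y); apply: H.
by rewrite lexx ler01.
Qed.

Lemma SS_M x : Omega x -> SSplus Omega xs g x = M x.
Proof.
move=> Ox; rewrite /SSplus.
set S := [set v x | v in _].
have MS : S (M x) by exists M => //; split; [exact: M_star | exact: g_le_M].
apply/eqP; rewrite eq_le; apply/andP; split.
- apply: ge_inf => //; exists (g x) => _ [v [vs vg] <-]; exact: vg.
- apply: lb_le_inf; first by exists (M x).
  move=> _ [v [vs vg] <-]; have [c c01 [-> _]] := M_max x Ox.
  apply: le_trans (vg _ (qO x c Ox c01)) _.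
  by have [] := vs (v x) x (conj Ox (lexx _)) c c01.
Qed.

Lemma qcont_x c x : {for x, continuous (fun y => q y c)}.
Proof.
rewrite /q; apply: (@continuousD _ _ _ (fun=> c *: xs) (fun y => (1 - c) *: y)).
  by move=> ?; apply: cst_continuous.
apply: (@continuousZ _ _ _ (fun=> 1 - c) id); [> by move=> ?; apply: cst_continuous | by move=> ?; apply: cvg_id].
Qed.

Lemma SS_lsc : lsc_on Omega (SSplus Omega xs g).
Proof.
move=> x Ox e e0.
have [c c01 [Mx _]] := M_max x Ox.
have cg : {for x, continuous (fun y => g (q y c))}.
  apply: (@continuous_comp _ _ _ (fun y => q y c) g); first exact: qcont_x.
  apply: gcO; exact: qO.
have lt : SSplus Omega xs g x - e < g (q x c) by rewrite SS_M // Mx; lra.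
apply: filterS (cvgr_gt _ cg _ lt) => y H Oy.
rewrite (SS_M y Oy); apply: lt_le_trans H _.
have [_ _ [_ Hy]] := M_max y Oy; exact: Hy.
Qed.

Lemma SS_usc : usc_on Omega (SSplus Omega xs g).
Proof.
move=> x Ox e e0.
have /compact_near_coveringP K := @segment_compact R 0 1.
have cov : forall t : R, `[0, 1]%classic t ->
    \forall t' \near t & y \near x, g (q y t') < M x + e.
  move=> t; rewrite /= in_itv /= => t01.
  have fc : {for (t, x), continuous (fun z : R * V => q z.2 z.1)}.
    rewrite /q.
    apply: (@continuousD _ _ _ (fun z : R * V => z.1 *: xs)
                                (fun z : R * V => (1 - z.1) *: z.2)).
      apply: (@continuousZ _ _ _ (fun z : R * V => z.1) (fun=> xs)).
        exact: cvg_fst.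
      by move=> ?; apply: cst_continuous.
    have -> : (fun z : R * V => (1 - z.1) *: z.2) =
              (fun z => z.2 - z.1 *: z.2).
      by apply: funext => z; rewrite scalerBl scale1r.
    apply: cvgB; first exact: cvg_snd.
    apply: (@continuousZ _ _ _ (fun z : R * V => z.1) (fun z => z.2)).
      exact: cvg_fst.
    exact: cvg_snd.
  have hc : {for (t, x), continuous (fun z : R * V => g (q z.2 z.1))}.
    apply: (@continuous_comp _ _ _ (fun z : R * V => q z.2 z.1) g (t, x) fc).
    apply: gcO; exact: qO.
  have lt : g (q x t) < M x + e.
    have [_ _ [_ H]] := M_max x Ox; have := H t t01; lra.
  exact: (cvgr_lt _ hc _ lt).
have KK := K V (nbhs x) (fun y t => g (q y t) < M x + e) (nbhs_filter x) cov.
apply: (filterS _ KK) => y H Oy.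
rewrite (SS_M y Oy) (SS_M x Ox).
have [c c01 [-> _]] := M_max y Oy.
by apply: H; rewrite /= in_itv /=.
Qed.

Lemma near_left (x v : V) (P : V -> Prop) :
  (\forall y \near x, P y) -> \forall h \near 0^'-, P (h *: v + x).
Proof.
move=> Hx.
have c : (fun h : R => h *: v + x) @ (0 : R) --> x.
  have : {for (0 : R), continuous (fun h : R => h *: v + x)}.
    apply: (@continuousD _ _ _ (fun h : R => h *: v) (fun=> x)).
      apply: (@continuousZ _ _ _ id (fun=> v)); [exact: cvg_id | exact: cvg_cst].
    exact: cvg_cst.
  by move=> H0; move: H0; rewrite /continuous_at /prop_for /= scale0r add0r.
exact: (cvg_at_left_filter c Hx).
Qed.

Lemma D_le0 (phi : V -> R) x v : derivable phi x v ->
  (\forall h \near 0^'-, phi x <= phi (h *: v + x)) -> 'D_v phi x <= 0.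
Proof.
move=> dphi H; rewrite /derive cvg_at_leftE //; apply: limr_le.
  exact: cvgP (cvg_dnbhs_at_left dphi).
apply: (filterS _ (filterI H (nbhs_left_lt 0))) => h [H1 H2] /=.
have hn : h^-1 <= 0 by rewrite invr_le0 ltW.
have a0 : 0 <= phi (h *: v + x) - phi x by rewrite subr_ge0.
exact: mulr_le0_ge0 hn a0.
Qed.

Lemma D_ge0 (phi : V -> R) x v : derivable phi x v ->
  (\forall h \near 0^'-, phi (h *: v + x) <= phi x) -> 0 <= 'D_v phi x.
Proof.
move=> dphi H; rewrite /derive cvg_at_leftE //; apply: limr_ge.
  exact: cvgP (cvg_dnbhs_at_left dphi).
apply: (filterS _ (filterI H (nbhs_left_lt 0))) => h [H1 H2] /=.
have hn : h^-1 <= 0 by rewrite invr_le0 ltW.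
have a0 : phi (h *: v + x) - phi x <= 0 by rewrite subr_le0.
exact: mulr_le0 hn a0.
Qed.

Lemma dotp_D (phi : V -> R) x v : differentiable phi x ->
  dotp v (grad phi x) = 'D_v phi x.
Proof.
move=> dphi; rewrite /dotp (deriveE _ dphi) {2}(row_sum_delta v) linear_sum.
apply: eq_bigr => i _; rewrite mxE (deriveE _ dphi) linearZ.
by [].
Qed.

Lemma main_sol : visc_sol Omega (Fobs g xs) (SSplus Omega xs g) /\
  SSplus Omega xs g xs = g xs.
Proof.
split; last first.
  by rewrite (SS_M xs Oxs); have [c _ [-> _]] := M_max xs Oxs; rewrite qxs.
split.
- split; first exact: SS_usc.
  move=> phi [dphi _] x Ox lmax.
  rewrite /Fobs ge_min.
  case: (leP (SSplus Omega xs g x) (g x)) => [le|gt].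
    by rewrite subr_le0 le.
  apply/orP; right.
  rewrite dotp_D; last exact: dphi.
  apply: D_le0; first exact: diff_derivable (dphi x Ox).
  have [c c01 [Mx Mb]] := M_max x Ox.
  have c0 : 0 < c.
    rewrite lt_neqAle; apply/andP; split; last by case/andP: c01.
    apply/eqP => c0; move: gt; rewrite (SS_M x Ox) Mx -c0 q0 ltxx.
    by [].
  have N := @near_left x (x - xs) _ lmax.
  have nc : - c < 0 by rewrite oppr_lt0.
  apply: (filterS _ (filterI N (filterI (nbhs_left_lt 0) (nbhs_left_gt nc)))).
  move=> h [H1 [hn hc]] /=.
  move: H1; rewrite /= qE => H1.
  have s01 : 0 <= - h <= 1.
    apply/andP; split; first by rewrite oppr_ge0 ltW.
    case/andP: c01 => _ c1; lra.
  have Oy := qO x (- h) Ox s01.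
  have := H1 Oy.
  have : SSplus Omega xs g x <= SSplus Omega xs g (q x (- h)).
    rewrite (SS_M x Ox) (SS_M _ Oy) Mx.
    have [_ _ [_ Hy]] := M_max _ Oy.
    have s1 : 0 < 1 - - h by case/andP: c01 => _ c1; lra.
    set r0 := (c - - h) / (1 - - h).
    have r01 : 0 <= r0 <= 1.
      apply/andP; split.
        by rewrite /r0 divr_ge0 // ?ltW //; lra.
      by rewrite /r0 ler_pdivrMr // mul1r; case/andP: c01 => _ c1; lra.
    have -> : q x c = q (q x (- h)) r0.
      rewrite qq; congr (q x _); rewrite /r0; field.
      by rewrite lt0r_neq0.
    exact: Hy.
  lra.
- split; first exact: SS_lsc.
  move=> phi [dphi _] x Ox lmin.
  rewrite /Fobs le_min; apply/andP; split.
    by rewrite subr_ge0 (SS_M x Ox); exact: g_le_M.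
  rewrite dotp_D; last exact: dphi.
  apply: D_ge0; first exact: diff_derivable (dphi x Ox).
  have N := @near_left x (x - xs) _ lmin.
  have nc : - 1 < (0 : R) by rewrite oppr_lt0.
  apply: (filterS _ (filterI N (filterI (nbhs_left_lt 0) (nbhs_left_gt nc)))).
  move=> h [H1 [hn hc]] /=.
  move: H1; rewrite /= qE => H1.
  have s01 : 0 <= - h <= 1.
    apply/andP; split; first by rewrite oppr_ge0 ltW.
    lra.
  have Oy := qO x (- h) Ox s01.
  have := H1 Oy.
  have : SSplus Omega xs g (q x (- h)) <= SSplus Omega xs g x.
    rewrite (SS_M x Ox) (SS_M _ Oy); exact: M_mono.
  lra.
Qed.
End Aux.

Theorem proposition3p12 (R : realType) (n : nat) (Omega : set 'rV[R]_n)
  (xs : 'rV[R]_n) (g : 'rV[R]_n -> R) :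
  open Omega -> connected Omega -> bounded_set Omega ->
  Omega xs -> star_shaped_set xs Omega ->
  {within Omega, continuous g} ->
  visc_sol Omega (Fobs g xs) (SSplus Omega xs g) /\
  SSplus Omega xs g xs = g xs.
Proof.
move=> oO _ _ Oxs sO gw.
have gc : {in Omega, continuous g} by rewrite -continuous_open_subspace.
exact: main_sol.
Qed.
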